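(* Let $\widehat{\mathbf{H}}_u,\mathbf{L}_1\in\mathbb{R}^{N_s\times N_b}$, $\lambda>0$, $\gamma_u\ge0$, $\beta_u\in\mathbb{R}$, $\mu_0>0$, $\rho>1$, $\mu_{\max}\ge\mu_0$. Let $f(\mathbf{L})=\|\mathbf{L}\|_*+\gamma_u\|\mathbf{L}-\beta_u\mathbf{L}_1\|_F^2$ and $g(\mathbf{S})=\lambda\|\mathbf{S}\|_1$, and consider the sequence $\{(\mathbf{L}_u^k,\mathbf{S}_u^k,\mathbf{Y}^k)\}_{k\ge0}$ generated from $\mathbf{S}_u^0=\mathbf{0}$, $\mathbf{Y}^0=\mathbf{0}$ by $$\mathbf{L}_u^{k+1}=\arg\min_{\mathbf{L}} f(\mathbf{L})+\tfrac{\mu_k}{2}\bigl\|\mathbf{L}-(\widehat{\mathbf{H}}_u-\mathbf{S}_u^k+\tfrac{1}{\mu_k}\mathbf{Y}^k)\bigr\|_F^2,$$ $$\mathbf{S}_u^{k+1}=\arg\min_{\mathbf{S}} g(\mathbf{S})+\tfrac{\mu_k}{2}\bigl\|\mathbf{S}-(\widehat{\mathbf{H}}_u-\mathbf{L}_u^{k+1}+\tfrac{1}{\mu_k}\mathbf{Y}^k)\bigr\|_F^2,$$ $$\mathbf{Y}^{k+1}=\mathbf{Y}^k+\mu_k(\widehat{\mathbf{H}}_u-\mathbf{L}_u^{k+1}-\mathbf{S}_u^{k+1}),\qquad \mu_{k+1}=\min\{\rho\mu_k,\mu_{\max}\}.$$ Then the sequence $\{\mathbf{Y}^k\}$ is 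bounded.
   Context: $\|\cdot\|_*$ is the nuclear norm, $\|\cdot\|_1$ the entrywise $\ell_1$-norm, $\|\cdot\|_F$ the Frobenius norm. These iterations are the ADMM scheme for $\min_{\mathbf{L},\mathbf{S}} f(\mathbf{L})+g(\mathbf{S})$ subject to $\mathbf{L}+\mathbf{S}=\widehat{\mathbf{H}}_u$. *)

(* Defs.v *)
From HB Require Import structures.
From mathcomp Require Import all_boot all_order all_algebra.
From mathcomp Require Import boolp classical_sets reals.
Local Open Scope classical_set_scope.
Set Implicit Arguments. Unset Strict Implicit. Unset Printing Implicit Defensive.
Import Order.TTheory GRing.Theory Num.Theory.
Local Open Scope ring_scope.

Definition l1norm (R : realType) (m n : nat) (A : 'M[R]_(m, n)) : R :=
  \sum_(i < m) \sum_(j < n) `|A i j|.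

Definition frob (R : realType) (m n : nat) (A : 'M[R]_(m, n)) : R :=
  Num.sqrt (\sum_(i < m) \sum_(j < n) (A i j) ^+ 2).

Definition is_svd (R : realType) (m n : nat) (A : 'M[R]_(m, n))
  (U : 'M[R]_m) (D : 'M[R]_(m, n)) (V : 'M[R]_n) : Prop :=
  [/\ U *m U^T = 1%:M, V *m V^T = 1%:M,
      (forall (i : 'I_m) (j : 'I_n), (i : nat) <> j -> D i j = 0),
      (forall (i : 'I_m) (j : 'I_n), 0 <= D i j) &
      A = U *m D *m V^T].

(* Nuclear norm = sum of singular values = trace of the diagonal factor of
   any SVD (chosen by classical choice; an SVD always exists). *)
Definition nuclear (R : realType) (m n : nat) (A : 'M[R]_(m, n)) : R :=
  xget 0 [set s | exists U D V, is_svd A U D V /\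
                   s = \sum_(i < m) \sum_(j < n) D i j].

(* Main.v *)
Require Import Defs.
From HB Require Import structures.
From mathcomp Require Import all_boot all_order all_algebra.
From mathcomp Require Import boolp reals.
From mathcomp Require Import ring lra.
Import Order.TTheory GRing.Theory Num.Theory.
Local Open Scope ring_scope.

Lemma sum_pert (R : realType) m n (F : R -> R) (A : 'M[R]_(m, n)) (t : R) i0 j0 :
  \sum_(i < m) \sum_(j < n) F ((A + t *: delta_mx i0 j0) i j) =
  \sum_(i < m) \sum_(j < n) F (A i j) + F (A i0 j0 + t) - F (A i0 j0).
Proof.
rewrite !pair_big /= (bigD1 (i0, j0)) //= [in RHS](bigD1 (i0, j0)) //=.
rewrite !mxE !eqxx /= mulr1.
have -> : \sum_(i : 'I_m * 'I_n | i != (i0, j0))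
   F ((A + t *: delta_mx i0 j0) i.1 i.2) =
   \sum_(i : 'I_m * 'I_n | i != (i0, j0)) F (A i.1 i.2).
  apply: eq_bigr => -[i j] /= hij; rewrite !mxE.
  suff -> : ((i == i0) && (j == j0)) = false by rewrite mulr0 addr0.
  apply/negbTE; apply: contra hij => /andP[/eqP -> /eqP ->]; by [].
ring.
Qed.

Lemma frob2 (R : realType) m n (A : 'M[R]_(m, n)) :
  frob A ^+ 2 = \sum_(i < m) \sum_(j < n) (A i j) ^+ 2.
Proof.
rewrite /frob sqr_sqrtr //; apply: sumr_ge0 => i _; apply: sumr_ge0 => j _.
exact: sqr_ge0.
Qed.
Theorem lemma1 (R : realType) (Ns Nb : nat) (H L1 : 'M[R]_(Ns, Nb))
  (lambda gamma beta mu0 rho mumax : R)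
  (hlambda : 0 < lambda) (hgamma : 0 <= gamma) (hmu0 : 0 < mu0)
  (hrho : 1 < rho) (hmumax : mu0 <= mumax)
  (mu : nat -> R) (L S Y : nat -> 'M[R]_(Ns, Nb))
  (hmu_0 : mu 0%N = mu0)
  (hmu_S : forall k, mu k.+1 = Num.min (rho * mu k) mumax)
  (hS0 : S 0%N = 0) (hY0 : Y 0%N = 0)
  (hL : forall k (L' : 'M[R]_(Ns, Nb)),
     nuclear (L k.+1) + gamma * (frob (L k.+1 - beta *: L1)) ^+ 2
       + mu k / 2 * (frob (L k.+1 - (H - S k + (mu k)^-1 *: Y k))) ^+ 2
     <= nuclear L' + gamma * (frob (L' - beta *: L1)) ^+ 2
       + mu k / 2 * (frob (L' - (H - S k + (mu k)^-1 *: Y k))) ^+ 2)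
  (hS : forall k (S' : 'M[R]_(Ns, Nb)),
     lambda * l1norm (S k.+1)
       + mu k / 2 * (frob (S k.+1 - (H - L k.+1 + (mu k)^-1 *: Y k))) ^+ 2
     <= lambda * l1norm S'
       + mu k / 2 * (frob (S' - (H - L k.+1 + (mu k)^-1 *: Y k))) ^+ 2)
  (hY : forall k, Y k.+1 = Y k + mu k *: (H - L k.+1 - S k.+1)) :
  exists C : R, forall k, frob (Y k) <= C.
Proof.
have mupos : forall k, 0 < mu k.
  elim=> [|k IH]; first by rewrite hmu_0.
  rewrite hmu_S lt_min; apply/andP; split.
    by apply: mulr_gt0 => //; apply: lt_trans hrho.
  exact: lt_le_trans hmumax.
have entry : forall k i j, `|Y k.+1 i j| <= 2 * lambda.
  move=> k i j.
  set T := H - L k.+1 + (mu k)^-1 *: Y k.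
  set s := S k.+1.
  set D := T - s.
  have hmu := mupos k.
  have hYe : Y k.+1 = mu k *: D.
    rewrite hY /D /T !scalerDr !scalerN scalerA mulfV ?gt_eqF // scale1r.
    by rewrite addrC [RHS]addrAC.
  set d := D i j.
  have e1 : (s - T) i j = - d by rewrite /d /D !mxE opprB.
  have hYij : Y k.+1 i j = mu k * d by rewrite hYe mxE.
  have := hS k (s + d *: delta_mx i j).
  have -> : s + d *: delta_mx i j - T = (s - T) + d *: delta_mx i j.
    by rewrite addrAC.
  rewrite !frob2 /l1norm (@sum_pert _ _ _ (fun x : R => x ^+ 2)) (@sum_pert _ _ _ (fun x : R => `|x|)) -/s -/T /=.
  rewrite e1 addNr.
  set l1 := \sum_(i < Ns) \sum_(j < Nb) `|s i j|.
  set F := \sum_(i0 < Ns) \sum_(j0 < Nb) (s - T) i0 j0 ^+ 2.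
  have htri : `|s i j + d| <= `|s i j| + `|d| by apply: ler_normD.
  rewrite hYij normrM (gtr0_norm hmu) => hineq.
  have hD2 : d ^+ 2 = `|d| ^+ 2 by rewrite real_normK // num_real.
  have hn : 0 <= `|d| by [].
  rewrite sqrrN expr0n /= hD2 in hineq.
  have h1 : mu k * `|d| ^+ 2 <= 2 * lambda * `|d|.
    have h2 : lambda * `|s i j + d| <= lambda * `|s i j| + lambda * `|d|.
      by rewrite -mulrDr ler_pM2l.
    have h3 : mu k / 2 * `|d| ^+ 2 <= lambda * `|d|.
      by move: hineq; rewrite addr0 !mulrDr ?mulrBr ?mulrN; lra.
    have e : mu k * `|d| ^+ 2 = 2 * (mu k / 2 * `|d| ^+ 2) by field.
    by rewrite e -(mulrA 2 lambda) ler_pM2l.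
  have [hz|hp] := eqVneq `|d| 0.
    by rewrite hz mulr0; apply: mulr_ge0 => //; apply: ltW.
  have hp' : 0 < `|d| by rewrite lt_def hp hn.
  have : mu k * `|d| * `|d| <= 2 * lambda * `|d| by rewrite -mulrA -expr2.
  by rewrite ler_pM2r.
exists (Num.sqrt (\sum_(i < Ns) \sum_(j < Nb) (2 * lambda) ^+ 2)).
case=> [|k].
  rewrite hY0 /frob ler_sqrt; last first.
    by apply: sumr_ge0 => i _; apply: sumr_ge0 => j _; exact: sqr_ge0.
  apply: ler_sum => i _; apply: ler_sum => j _; rewrite mxE expr0n /=.
  exact: sqr_ge0.
rewrite /frob ler_sqrt; last first.
  by apply: sumr_ge0 => i _; apply: sumr_ge0 => j _; exact: sqr_ge0.
apply: ler_sum => i _; apply: ler_sum => j _.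
rewrite -real_normK ?num_real //; apply: lerXn2r; rewrite ?nnegrE ?entry //.
by apply: mulr_ge0 => //; apply: ltW.
Qed.
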